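(* Let $f:[0,1]^n\to[0,1]$ be continuous and polynomially bounded. Then there is an integer $t_0$ such that for every integer $t\ge t_0$, $$f(p)-\frac14\,\mathbb{P}_p\!\left[f(\bar X_t)\ge \tfrac12\right]\ \ge\ \frac18 f(p)\qquad\text{for all } p\in[0,1]^n.$$
   Context: For $p\in[0,1]^n$, let $X_1,X_2,\dots$ be i.i.d. random vectors in $\{0,1\}^n$ whose coordinates $X_{s,i}$ are independent Bernoulli($p_i$) variables, and let $\bar X_t=(X_1+\dots+X_t)/t\in[0,1]^n$; $\mathbb{P}_p$ denotes probability under this law. For a partition $[n]=A\sqcup S\sqcup B$, the open face is $F_{A,S,B}=\{p\in[0,1]^n: p_i=0\ (i\in A),\ 0<p_i<1\ (i\in S),\ p_i=1\ (i\in B)\}$. For $T\subseteq[n]$, $p^T=\prod_{i\in T}p_i$, $(1-p)^T=\prod_{i\in T}(1-p_i)$. A function $f:[0,1]^n\to[0,1]$ is polynomially bounded if there exist an integer $m\ge0$ and a real $c>0$ such that for every open face $F_{A,S,B}$ on which $f$ is not identically $0$, $f(p)\ge c\left((1-p)^A p^S(1-p)^S p^B\right)^m$ for all $p\in[0,1]^n$. *)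

(* Defs.v *)
From HB Require Import structures.
From mathcomp Require Import all_boot all_order all_algebra.
From mathcomp Require Import all_classical all_reals all_analysis.
Unset Printing Implicit Defensive.
Import Order.TTheory GRing.Theory Num.Theory numFieldNormedType.Exports.
Local Open Scope ring_scope.
Local Open Scope classical_set_scope.

Section Defs.
Variable R : realType.
Variable n : nat.

Definition cube : set 'rV[R]_n := [set p | forall i : 'I_n, 0 <= p ord0 i <= 1].

Definition face (A S B : {set 'I_n}) : set 'rV[R]_n :=
  [set p | (forall i, i \in A -> p ord0 i = 0) /\
           (forall i, i \in S -> 0 < p ord0 i < 1) /\
           (forall i, i \in B -> p ord0 i = 1)].

Definition is_partition3 (A S B : {set 'I_n}) : Prop :=
  [/\ (A :&: S = finset.set0)%SET, (A :&: B = finset.set0)%SET, (S :&: B = finset.set0)%SET & (A :|: S :|: B = [set: 'I_n])%SET].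

Definition face_monomial (A S B : {set 'I_n}) (p : 'rV[R]_n) : R :=
  (\prod_(i in A) (1 - p ord0 i)) * (\prod_(i in S) (p ord0 i * (1 - p ord0 i)))
  * (\prod_(i in B) p ord0 i).

Definition polynomially_bounded (f : 'rV[R]_n -> R) : Prop :=
  exists (m : nat) (c : R), 0 < c /\
    forall A S B : {set 'I_n}, is_partition3 A S B ->
      (exists q, face A S B q /\ f q != 0) ->
      forall p, cube p -> c * (face_monomial A S B p) ^+ m <= f p.

(* A sample (X_1,...,X_t) is a t x n boolean matrix x; x s i = X_{s+1,i}.
   Its probability under P_p (independent Bernoulli(p_i) coordinates). *)
Definition sample_weight (t : nat) (p : 'rV[R]_n) (x : 'M[bool]_(t, n)) : R :=
  \prod_(s < t) \prod_(i < n) (if x s i then p ord0 i else 1 - p ord0 i).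

Definition sample_mean (t : nat) (x : 'M[bool]_(t, n)) : 'rV[R]_n :=
  \row_i ((\sum_(s < t) ((x s i : nat)%:R : R)) / t%:R).

Definition Prob (t : nat) (p : 'rV[R]_n) (E : pred 'M[bool]_(t, n)) : R :=
  \sum_(x : 'M[bool]_(t, n) | E x) sample_weight t p x.

End Defs.

(* Main.v *)
Require Import Defs.
From HB Require Import structures.
From mathcomp Require Import all_boot all_order all_algebra.
From mathcomp Require Import ring lra zify.
From mathcomp Require Import all_classical all_reals all_analysis.
Import Order.TTheory GRing.Theory Num.Theory numFieldNormedType.Exports.
Local Open Scope ring_scope.
Local Open Scope classical_set_scope.
Module PartA.

Set Implicit Arguments. Unset Strict Implicit.
Local Open Scope ring_scope.

Section Col.
Variable R : realType.
Variable t : nat.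
Local Notation colT := {ffun 'I_t -> bool}.
Definition w1 (p : R) (b : bool) : R := if b then p else 1 - p.
Definition colw (p : R) (c : colT) : R := \prod_(s < t) w1 p (c s).
Definition P1 (p : R) (E : pred colT) : R := \sum_(c : colT | E c) colw p c.
Definition ones (c : colT) : nat := #|[pred s | c s]|.
Definition colmean (c : colT) : R := (ones c)%:R / t%:R.

Lemma sum_prod_col (h : 'I_t -> bool -> R) :
  \sum_(c : colT) \prod_s h s (c s) = \prod_s (h s true + h s false).
Proof.
rewrite (eq_bigr (fun s => \sum_(b : bool) h s b)); last by move=> s _; rewrite big_bool.
by rewrite bigA_distr_bigA.
Qed.

Lemma ones_sum (c : colT) : (\sum_s ((c s : nat)%:R : R)) = (ones c)%:R.
Proof.
rewrite -natr_sum /ones -sum1_card [in RHS]big_mkcond /=.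
by congr (_%:R); apply: eq_bigr => s _; case: (c s) => /=; rewrite inE ?Hc.
Qed.

Lemma ones_le (c : colT) : (ones c <= t)%N.
Proof. by rewrite /ones -[X in (_ <= X)%N]card_ord max_card. Qed.

Lemma colwE p (c : colT) : colw p c = p ^+ ones c * (1 - p) ^+ (t - ones c).
Proof.
rewrite /colw (bigID (fun s => c s)) /=.
rewrite (eq_bigr (fun _ => p)); last by move=> s ->.
rewrite [X in _ * X](eq_bigr (fun _ => 1 - p)); last by move=> s hs; rewrite (negbTE hs).
have -> : \prod_(i < t | c i) p = p ^+ ones c by rewrite -prodr_const.
have -> : \prod_(i < t | ~~ c i) (1 - p) = (1 - p) ^+ #|[pred s | ~~ c s]| by rewrite -prodr_const.
have := cardC [pred s | c s]; rewrite card_ord => H.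
rewrite -[X in (X - _)%N]H addKn; done.
Qed.

Section P.
Variable p : R.
Hypothesis p01 : 0 <= p <= 1.

Lemma w1_ge0 b : 0 <= w1 p b.
Proof. by case/andP: p01 => ? ?; case: b => //=; rewrite subr_ge0. Qed.

Lemma colw_ge0 c : 0 <= colw p c.
Proof. by apply: prodr_ge0 => s _; apply: w1_ge0. Qed.

Lemma P1_ge0 (E : pred colT) : 0 <= P1 p E.
Proof. by apply: sumr_ge0 => c _; apply: colw_ge0. Qed.

Lemma colw_total : \sum_c colw p c = 1.
Proof.
rewrite /colw (sum_prod_col (fun s b => w1 p b)) /=.
by apply: big1 => s _; rewrite addrC subrK.
Qed.

Lemma P1_mono (E E' : pred colT) : (forall c, E c -> E' c) -> P1 p E <= P1 p E'.
Proof.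
move=> H; rewrite /P1 [leRHS]big_mkcond [leLHS]big_mkcond /=.
apply: ler_sum => c _; case: (boolP (E c)) => Ec; first by rewrite (H _ Ec).
by case: (E' c) => //; apply: colw_ge0.
Qed.

Lemma P1_le1 (E : pred colT) : P1 p E <= 1.
Proof.
rewrite -colw_total; have -> : \sum_c colw p c = P1 p predT by [].
by apply: P1_mono.
Qed.

Lemma P1_card (E : pred colT) a : (forall c, E c -> colw p c <= a) -> 0 <= a ->
  P1 p E <= 2%:R ^+ t * a.
Proof.
move=> H a0; rewrite /P1.
apply: (@le_trans _ _ (\sum_(c : colT | E c) a)); first by apply: ler_sum.
rewrite big_mkcond /=.
apply: (@le_trans _ _ (\sum_(c : colT) a)).
  by apply: ler_sum => c _; case: (E c).
by rewrite sumr_const card_ffun card_bool card_ord -natrX mulr_natl.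
Qed.

Lemma colw_le (c : colT) a b : (a <= ones c)%N -> (b <= t - ones c)%N ->
  colw p c <= p ^+ a * (1 - p) ^+ b.
Proof.
case/andP: p01 => p0 p1 ha hb; rewrite colwE.
have q0 : 0 <= 1 - p by rewrite subr_ge0.
have q1 : 1 - p <= 1 by rewrite lerBlDr lerDl.
apply: ler_pM; rewrite ?exprn_ge0 //; exact: ler_wiXn2l.
Qed.


Lemma second_moment :
  \sum_(c : colT) colw p c * ((ones c)%:R - t%:R * p) ^+ 2 = t%:R * (p * (1 - p)).
Proof.
pose a (b : bool) : R := (b : nat)%:R - p.
have E1 c : (ones c)%:R - t%:R * p = \sum_s a (c s).
  by rewrite /a sumrB ones_sum sumr_const card_ord mulr_natl.
have E2 c : colw p c * (\sum_s a (c s)) ^+ 2 =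
    \sum_s \sum_s' colw p c * (a (c s) * a (c s')).
  by rewrite expr2 mulr_suml mulr_sumr; apply: eq_bigr => s _; rewrite mulr_sumr mulr_sumr.
have E3 s s' : \sum_(c : colT) colw p c * (a (c s) * a (c s')) =
    if s' == s then p * (1 - p) else 0.
  rewrite (eq_bigr (fun c : colT => \prod_u (w1 p (c u) * (if u == s then a (c u) else 1)
      * (if u == s' then a (c u) else 1)))); last first.
    move=> c _; rewrite !big_split /= -!big_mkcond /= !big_pred1_eq mulrA //.
  rewrite (sum_prod_col (fun u b => w1 p b * (if u == s then a b else 1) * (if u == s' then a b else 1))).
  case: eqP => [->|ne].
    rewrite (bigD1 s) //= eqxx big1 => [|u us]; last first.
      by rewrite (negbTE us) /= !mulr1 /w1 addrC subrK.
    rewrite /w1 /a /=; ring.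
  rewrite (bigD1 s) //= eqxx.
  have -> : (s == s') = false by apply/eqP => h; apply: ne.
  rewrite /w1 /a /= !mulr1; set Z := \prod_(i < t | _) _; ring.
rewrite (eq_bigr (fun c : colT => \sum_s \sum_s' colw p c * (a (c s) * a (c s')))); last first.
  by move=> c _; rewrite E1 E2.
rewrite exchange_big /=.
rewrite (eq_bigr (fun s => p * (1 - p))); last first.
  move=> s _; rewrite exchange_big /=.
  rewrite (eq_bigr (fun s' => if s' == s then p * (1 - p) else 0)); last by move=> s' _; apply: E3.
  by rewrite -big_mkcond big_pred1_eq.
by rewrite sumr_const card_ord mulr_natl.
Qed.

Lemma cheb d : 0 < d -> (0 < t)%N ->
  P1 p (fun c => d <= `|colmean c - p|) <= (t%:R * d ^+ 2)^-1.
Proof.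
move=> d0 t0.
have tR : 0 < (t%:R : R) by rewrite ltr0n.
apply: (@le_trans _ _ (\sum_(c : colT) colw p c * (((ones c)%:R - t%:R * p) ^+ 2 / (t%:R ^+ 2 * d ^+ 2)))).
  rewrite /P1 [leRHS](bigID (fun c => d <= `|colmean c - p|)) /=.
  apply: ler_wpDr.
    apply: sumr_ge0 => c _; apply: mulr_ge0; first exact: colw_ge0.
    by apply: divr_ge0; rewrite ?sqr_ge0 // mulr_ge0 // ?sqr_ge0.
  apply: ler_sum => c hc; rewrite -[leLHS]mulr1; apply: ler_wpM2l; first exact: colw_ge0.
  have hd : 0 < t%:R ^+ 2 * d ^+ 2 by rewrite mulr_gt0 // exprn_gt0.
  rewrite ler_pdivlMr // mul1r.
  have -> : (ones c)%:R - t%:R * p = t%:R * (colmean c - p).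
    by rewrite /colmean mulrBr mulrCA mulfV ?mulr1 // gt_eqF.
  rewrite exprMn ler_pM2l ?exprn_gt0 //.
  rewrite -(real_normK (num_real (colmean c - p))) !expr2.
  by apply: ler_pM => //; apply: ltW.
rewrite (eq_bigr (fun c : colT => colw p c * ((ones c)%:R - t%:R * p) ^+ 2 * (t%:R ^+ 2 * d ^+ 2)^-1)); last first.
  by move=> c _; rewrite mulrA.
rewrite -mulr_suml.
rewrite second_moment.
case/andP: p01 => p0 p1.
have hpq : p * (1 - p) <= 1 by nra.
have hd : 0 < d ^+ 2 by rewrite exprn_gt0.
have -> : t%:R * (p * (1 - p)) / (t%:R ^+ 2 * d ^+ 2) = p * (1 - p) * (t%:R * d ^+ 2)^-1.
  by field; rewrite ?gt_eqF // ?mulr_gt0 ?exprn_gt0.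
rewrite -[leRHS]mul1r ler_pM2r // invr_gt0 mulr_gt0 //.
Qed.

End P.
End Col.

End PartA.
Import PartA.

Module PartB.
Import PartA.
Set Implicit Arguments. Unset Strict Implicit.
Local Open Scope ring_scope.

Section Mat.
Variable R : realType.
Variables n t : nat.
Local Notation colT := {ffun 'I_t -> bool}.
Definition col (x : 'M[bool]_(t, n)) (i : 'I_n) : colT := [ffun s => x s i].

Lemma sum_mat_ffun (H : {ffun 'I_n -> colT} -> R) :
  \sum_(x : 'M[bool]_(t, n)) H [ffun i => col x i] = \sum_(F : {ffun 'I_n -> colT}) H F.
Proof.
rewrite (reindex (fun F : {ffun 'I_n -> colT} => \matrix_(s, i) F i s)) /=.
  apply: eq_bigr => F _; congr H; apply/ffunP => i; apply/ffunP => s.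
  by rewrite !ffunE mxE.
exists (fun x => [ffun i => col x i]) => [F _ | x _].
  by apply/ffunP => i; apply/ffunP => s; rewrite !ffunE mxE.
by apply/matrixP => s i; rewrite mxE !ffunE.
Qed.

Lemma sample_weightE (p : 'rV[R]_n) x :
  sample_weight R n t p x = \prod_i colw (p ord0 i) (col x i).
Proof.
rewrite /sample_weight exchange_big /=; apply: eq_bigr => i _.
by apply: eq_bigr => s _; rewrite ffunE.
Qed.

Lemma Prob_prod (p : 'rV[R]_n) (E : 'I_n -> pred colT) :
  Prob R n t p (fun x => [forall i, E i (col x i)]) = \prod_i P1 (p ord0 i) (E i).
Proof.
rewrite /Prob /P1.
rewrite (eq_bigr (fun i => \sum_(c : colT) if E i c then colw (p ord0 i) c else 0)); last first.
  by move=> i _; rewrite big_mkcond.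
rewrite bigA_distr_bigA /=.
rewrite -(sum_mat_ffun (fun F => \prod_i (if E i (F i) then colw (p ord0 i) (F i) else 0))).
rewrite big_mkcond /=; apply: eq_bigr => x _.
case: (boolP [forall i, E i (col x i)]) => [/forallP h | /forallPn [j hj]].
  rewrite sample_weightE; apply: eq_bigr => i _; by rewrite ffunE h.
rewrite (bigD1 j) //= ffunE (negbTE hj) mul0r //.
Qed.

Lemma Prob_total (p : 'rV[R]_n) : cube R n p ->
  \sum_(x : 'M[bool]_(t, n)) sample_weight R n t p x = 1.
Proof.
move=> hp.
rewrite (_ : \sum_(x : 'M[bool]_(t, n)) sample_weight R n t p x = Prob R n t p (fun x => [forall i, predT (col x i)])).
  by rewrite (Prob_prod p (fun _ => predT)); apply: big1 => i _; exact: colw_total.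
rewrite /Prob; apply: eq_bigl => x /=; apply/esym/forallP => i //.
Qed.

Lemma sample_weight_ge0 (p : 'rV[R]_n) x : cube R n p -> 0 <= sample_weight R n t p x.
Proof. move=> hp; rewrite sample_weightE; apply: prodr_ge0 => i _; exact: colw_ge0. Qed.

Lemma Prob_le1 (p : 'rV[R]_n) E : cube R n p -> Prob R n t p E <= 1.
Proof.
move=> hp; rewrite -(Prob_total hp) /Prob [leRHS](bigID E) /= lerDl.
by apply: sumr_ge0 => x _; apply: sample_weight_ge0.
Qed.

Lemma sample_meanE x i : sample_mean R n t x ord0 i = colmean R (col x i).
Proof.
rewrite /sample_mean /colmean mxE -ones_sum; congr (_ / _).
by apply: eq_bigr => s _; rewrite ffunE.
Qed.

End Mat.

End PartB.
Import PartB.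

Module PartC.
Import PartA. Import PartB.
Set Implicit Arguments. Unset Strict Implicit.
Local Open Scope ring_scope.

Definition region {R : realType} (eta v : R) : option bool :=
  if v < eta then Some false else if v <= 1 - eta then None else Some true.

Definition gfun {R : realType} (o : option bool) (p : R) : R :=
  match o with Some false => 1 - p | None => p * (1 - p) | Some true => p end.

Lemma gfun01 {R : realType} o (p : R) : 0 <= p <= 1 -> 0 <= gfun o p <= 1.
Proof. by case/andP => p0 p1; case: o => [[]|] /=; apply/andP; split; nra. Qed.

Section C.
Variable R : realType.
Variables t L m e : nat.
Hypothesis hL : (2 <= L)%N.
Hypothesis ht : (2 * (L * m) + 2 * L + e <= t)%N.
Local Notation colT := {ffun 'I_t -> bool}.
Local Notation N := (t %/ L)%N.
Local Notation eta := ((L%:R : R)^-1).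

Lemma NL_le : (N * L <= t)%N.
Proof. exact: leq_trunc_div. Qed.
Lemma NL_gt : (t < N * L + L)%N.
Proof. by have := ltn_ceil t (leq_trans (isT : (0 < 2)%N) hL); rewrite mulSn addnC. Qed.

Lemma N_ge_m : (m <= N)%N.
Proof.
have h1 := NL_gt; rewrite -(leq_pmul2r (leq_trans (isT : (0 < 2)%N) hL)).
nia.
Qed.

Lemma pow_fact : (2 ^ t * 2 ^ e <= (4 ^ L) ^ (N - m))%N.
Proof.
rewrite -expnD -expnM (_ : 4 = 2 ^ 2)%N // -expnM.
apply: leq_pexp2l => //.
have h1 := NL_gt; have h2 := N_ge_m.
have -> : (L * (N - m) = N * L - L * m)%N by rewrite mulnBr mulnC.
lia.
Qed.

Lemma region_colw (p : R) (c : colT) o : 0 <= p <= 1 ->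
  region eta (colmean R c) = o -> colw p c <= gfun o p ^+ N.
Proof.
move=> p01 hreg.
have hk := ones_le c.
have t0 : (0 < t)%N by lia.
have L0 : (0 < L)%N by lia.
have tR : 0 < (t%:R : R) by rewrite ltr0n.
have LR : 0 < (L%:R : R) by rewrite ltr0n.
have hNL : ((N * L)%:R <= (t%:R : R)) by rewrite ler_nat NL_le.
rewrite natrM in hNL.
have cm : colmean R c * t%:R = (ones c)%:R by rewrite /colmean divfK ?gt_eqF.
have eL : eta * L%:R = 1 by rewrite mulVf ?gt_eqF.
set k := ones c in hk cm *.
set y := colmean R c in hreg cm.
have X0 : 0 < (t%:R : R) * L%:R by rewrite mulr_gt0.
have e1 : (k%:R * L%:R : R) = y * ((t%:R : R) * L%:R) by rewrite -cm; ring.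
have e2 : (t%:R : R) = eta * ((t%:R : R) * L%:R) by rewrite mulrCA eL mulr1.
set X := (t%:R : R) * L%:R in X0 e1 e2 *.
move: hreg; rewrite /region.
case: ltrP => h1.
  move=> <- /=.
  have : (k%:R * L%:R < (t%:R : R)) by nra.
  rewrite -natrM ltr_nat => h.
  have hb : (N <= t - k)%N by nia.
  by have := colw_le p01 (leq0n k) hb; rewrite expr0 mul1r.
case: ifP => h2 <- /=.
  have : ((t%:R : R) <= k%:R * L%:R) by nra.
  rewrite -natrM ler_nat => ha.
  have : (k%:R * L%:R + t%:R <= (t%:R : R) * L%:R) by nra.
  rewrite -!natrM -natrD ler_nat => hb.
  have ha' : (N <= k)%N by rewrite -(leq_pmul2r L0); lia.
  have hb' : (N <= t - k)%N by rewrite -(leq_pmul2r L0) mulnBl; lia.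
  by rewrite exprMn; apply: colw_le.
have : ((t%:R : R) * L%:R < k%:R * L%:R + t%:R) by move/negbT: h2; rewrite -ltNge => h2; nra.
rewrite -!natrM -natrD ltr_nat => h.
have ha : (N <= k)%N by nia.
by have := colw_le p01 ha (leq0n (t - k)); rewrite expr0 mulr1.
Qed.


Lemma P1_region_bound (p : R) o (E : pred colT) (a : R) :
  0 <= p <= 1 -> (forall c, E c -> region eta (colmean R c) = o) ->
  ((2%:R : R) ^+ e)^-1 <= a -> P1 p E <= a ->
  P1 p E <= a * ((4%:R : R) ^+ L) ^+ m * gfun o p ^+ m.
Proof.
move=> p01 hE hea hPa.
have /andP[g0 g1] := gfun01 o p01.
set g := gfun o p in g0 g1 *.
set Qr := (4%:R : R) ^+ L.
have Q1 : 1 <= Qr by rewrite exprn_ege1 // ler1n.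
have Q0 : 0 < Qr by apply: lt_le_trans Q1.
have P0 : 0 <= P1 p E by apply: P1_ge0.
have a0 : 0 <= a by apply: le_trans hPa.
have K1 : 1 <= Qr ^+ m by rewrite exprn_ege1.
have gm0 : 0 <= g ^+ m by rewrite exprn_ge0.
case: (leP (Qr^-1) g) => hg.
  have : 1 <= Qr ^+ m * g ^+ m.
    rewrite -exprMn exprn_ege1 //.
    have Qn : Qr != 0 by rewrite gt_eqF.
    by rewrite -(mulfV Qn) ler_pM2l.
  move=> h; rewrite -mulrA; apply: (le_trans hPa); exact: ler_peMr.
have H1 : P1 p E <= 2%:R ^+ t * g ^+ N.
  apply: P1_card; last by rewrite exprn_ge0.
  by move=> c hc; apply: region_colw => //; apply: hE.
have H2 : g ^+ N <= g ^+ m * Qr^-1 ^+ (N - m).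
  rewrite -{1}(subnKC N_ge_m) exprD; apply: ler_wpM2l => //.
  by apply: lerXn2r; rewrite ?nnegrE ?invr_ge0 ?(ltW hg) ?(ltW Q0).
have H3 : 2%:R ^+ t * Qr^-1 ^+ (N - m) <= ((2%:R : R) ^+ e)^-1.
  have := pow_fact; rewrite -(ler_nat R) !natrM !natrX -/Qr => hp.
  have Z0 : 0 < Qr ^+ (N - m) by rewrite exprn_gt0.
  have E0 : 0 < (2%:R : R) ^+ e by rewrite exprn_gt0.
  rewrite exprVn ler_pdivrMr // mulrC ler_pdivlMr //.
have T0 : 0 <= (2%:R : R) ^+ t by rewrite exprn_ge0.
have Z0 : 0 <= Qr^-1 ^+ (N - m) by rewrite exprn_ge0 // invr_ge0 ltW.
have aG : 0 <= a * g ^+ m by rewrite mulr_ge0.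
set T := (2%:R : R) ^+ t in H1 H3 T0.
set Z := Qr^-1 ^+ (N - m) in H2 H3 Z0.
set G := g ^+ N in H1 H2.
set Gm := g ^+ m in gm0 H2 aG *.
set K := Qr ^+ m in K1 *.
set ee := ((2%:R : R) ^+ e)^-1 in hea H3.
nra.
Qed.

End C.

End PartC.
Import PartC.

Module PartD.
Import PartA. Import PartB. Import PartC.
Set Implicit Arguments. Unset Strict Implicit.
Local Open Scope ring_scope.
Local Open Scope classical_set_scope.

Lemma cube_compact (R : realType) n : compact (cube R n).
Proof.
have -> : cube R n = [set v : 'rV[R]_n | forall i, `[(0:R), 1]%classic (v ord0 i)].
  by rewrite predeqE => v /=; split => h i; have := h i; rewrite /= in_itv.
by apply: (@rV_compact _ n (fun _ => `[(0:R), 1]%classic)) => i; apply: segment_compact.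
Qed.

Lemma ball_coord (R : realType) n (x y : 'rV[R]_n) r :
  0 < r -> (forall i, `|x ord0 i - y ord0 i| < r) -> ball x r y.
Proof.
move=> r0 h; split => // i j; rewrite (ord1 i); exact: h.
Qed.

Lemma coord_ball (R : realType) n (x y : 'rV[R]_n) r :
  ball x r y -> forall i, `|x ord0 i - y ord0 i| < r.
Proof. by case=> _ h i; apply: h. Qed.

Lemma unif_cont (R : realType) n (f : 'rV[R]_n -> R) :
  {within cube R n, continuous f} ->
  forall eps : R, 0 < eps -> exists2 d : R, 0 < d &
    forall x y, cube R n x -> cube R n y ->
      (forall i, `|x ord0 i - y ord0 i| < d) -> `|f x - f y| < eps.
Proof.
move=> hc eps e0.
pose P (d : R) (x' : 'rV[R]_n) := cube R n x' -> forall y, cube R n y ->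
  (forall i, `|x' ord0 i - y ord0 i| < d) -> `|f x' - f y| < eps.
have Hcov : \forall d \near (0:R)^'+, cube R n `<=` P d.
  have /compact_near_coveringP hcov := @cube_compact R n.
  apply: (hcov R (0:R)^'+ P).
  move=> x hx.
  have := (proj1 (subspace_continuousP _ _) hc) x hx.
  move=> /cvgrPdist_lt /(_ (eps / 2)) h.
  have : nbhs x (fun t => cube R n t -> `|f x - f t| < eps / 2).
    by apply: h; lra.
  case/nbhs_ballP => r /= r0 hr.
  exists (ball x (r / 2), [set d : R | 0 < d < r / 2]).
    split => /=; first by apply: nbhsx_ballx; lra.
    near=> d; apply/andP; split; first by near: d; exact: nbhs_right_gt.
    by near: d; apply: nbhs_right_lt; lra.
  move=> [x' d] /= [/= hx' /andP [d0 dr]] cx' y cy hxy.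
  have hxx' := coord_ball hx'.
  have bx' : ball x r x'.
    by apply: ball_coord => // i; apply: lt_trans (hxx' i) _; lra.
  have bY : ball x r y.
    apply: ball_coord => // i.
    have h1 := hxx' i; have h2 := hxy i.
    have := ler_normD (x ord0 i - x' ord0 i) (x' ord0 i - y ord0 i).
    rewrite addrA subrK => h3; lra.
  have f1 := hr _ bx' cx'.
  have f2 := hr _ bY cy.
  have -> : f x' - f y = (f x' - f x) + (f x - f y) by ring.
  apply: le_lt_trans (ler_normD _ _) _.
  rewrite distrC in f1; lra.
near (0:R)^'+ => d.
exists d; first by near: d; exact: nbhs_right_gt.
move=> x1 y1 hx1 hy1 hxy1.
have HH := near Hcov d.
exact: (HH _ x1 hx1 hx1 y1 hy1 hxy1).
Unshelve. all: end_near.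
Qed.

End PartD.
Import PartD.

Module PartE.
Import PartA. Import PartB. Import PartC. Import PartD.
Set Implicit Arguments. Unset Strict Implicit.
Local Open Scope ring_scope.
Local Open Scope classical_set_scope.

Definition Aset n (tau : {ffun 'I_n -> option bool}) : {set 'I_n} := [set i | tau i == Some false].
Definition Sset n (tau : {ffun 'I_n -> option bool}) : {set 'I_n} := [set i | tau i == None].
Definition Bset n (tau : {ffun 'I_n -> option bool}) : {set 'I_n} := [set i | tau i == Some true].

Lemma part3 n (tau : {ffun 'I_n -> option bool}) : is_partition3 n (Aset tau) (Sset tau) (Bset tau).
Proof.
by split; apply/setP => i; rewrite !inE; case: (tau i) => [[]|].
Qed.

Lemma fm_prod (R : realType) n (tau : {ffun 'I_n -> option bool}) (p : 'rV[R]_n) :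
  face_monomial R n (Aset tau) (Sset tau) (Bset tau) p = \prod_i gfun (tau i) (p ord0 i).
Proof.
rewrite /face_monomial !(big_mkcond (fun i => i \in _)) /= -!big_split /=.
by apply: eq_bigr => i _; rewrite !inE; case: (tau i) => [[]|] /=; rewrite ?mulr1 ?mul1r.
Qed.

Definition rnd (R : realType) (eta v : R) : R :=
  match region eta v with Some false => 0 | None => v | Some true => 1 end.

Lemma rnd_props (R : realType) (eta d v : R) : 0 < eta -> eta < d -> 0 <= v <= 1 ->
  [/\ 0 <= rnd eta v <= 1, `|v - rnd eta v| < d & (region eta v = None -> 0 < v < 1)].
Proof.
move=> e0 ed /andP [v0 v1]; rewrite /rnd /region.
case: ltrP => h1.
  split => //; first by rewrite lexx ler01.
  by rewrite subr0 ger0_norm //; apply: lt_trans ed.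
case: ifP => h2.
  split => //; first by apply/andP.
  by rewrite subrr normr0; apply: lt_trans ed.
  move=> _; apply/andP; split; lra.
split => //; first by rewrite ler01 lexx.
move/negbT: h2; rewrite -ltNge => h2.
rewrite distrC ger0_norm; lra.
Qed.

Lemma le_sum2 (R : realType) (I J : finType) (G : I -> J -> R) a b :
  (forall i j, 0 <= G i j) -> G a b <= \sum_i \sum_j G i j.
Proof.
move=> h; rewrite (bigD1 a) //= (bigD1 b) //= -addrA lerDl.
by apply: addr_ge0; apply: sumr_ge0 => i _; [|apply: sumr_ge0 => j _].
Qed.

End PartE.
Import PartE.

Local Open Scope ring_scope.
Local Open Scope classical_set_scope.

Lemma nat_gt {R : realType} (x : R) : exists k : nat, x < k%:R.
Proof. by exists (Num.truncn x).+1; apply: truncnS_gt. Qed.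

Lemma final_arith {R : realType} (F P : R) : 0 <= F -> P <= 1 ->
  (P <= F \/ 2%:R / 7%:R <= F) -> F - 4^-1 * P >= 8^-1 * F.
Proof. move=> h1 h2 [] h3; lra. Qed.

Lemma arith2 {R : realType} (a b : R) : 2^-1 <= a -> b < 2%:R / 7%:R -> `|a - b| < 8^-1 -> False.
Proof. move=> h1 h2 h3; have := ler_norm (a - b); lra. Qed.

Lemma arith3 {R : realType} (a b : R) : 2^-1 <= a -> `|a - b| < 8^-1 -> b != 0.
Proof. move=> h1 h2; apply/eqP => hb; move: h2; rewrite hb subr0 => h2; have := ler_norm a; lra. Qed.

Theorem lemma5 (R : realType) (n : nat) (f : 'rV[R]_n -> R) :
  {within cube R n, continuous f} ->
  (forall p, cube R n p -> 0 <= f p <= 1) ->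
  polynomially_bounded R n f ->
  exists t0 : nat, forall t : nat, (t0 <= t)%N ->
    forall p, cube R n p ->
      f p - 4^-1 * Prob R n t p (fun x => 2^-1 <= f (sample_mean R n t x)) >= 8^-1 * f p.
Proof.
move=> hc hf [m [c [c0 hpb]]].
have h8 : (0:R) < 8^-1 by rewrite invr_gt0 ltr0n.
have [d d0 hd] := unif_cont hc h8.
have [L hL hdL] : exists2 L : nat, (1 < L)%N & d^-1 < L%:R.
  have [k0 hk0] := nat_gt (d^-1).
  exists (k0 + 2)%N; first by rewrite addn2.
  by apply: lt_le_trans hk0 _; rewrite ler_nat leq_addr.
have LR : 0 < (L%:R : R) by rewrite ltr0n (ltn_trans _ hL).
have heta : (L%:R : R)^-1 < d.
  by move: hdL; rewrite -ltf_pV2 ?posrE ?invr_gt0 // invrK.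
set eta := (L%:R : R)^-1 in heta.
have eta0 : 0 < eta by rewrite invr_gt0.
pose K := ((4%:R : R) ^+ L) ^+ m.
have K1 : 1 <= K by rewrite !exprn_ege1 // ler1n.
have [e he] := nat_gt ((3 ^ n * n)%:R * K ^+ n / c).
have he2 : (3 ^ n * n)%:R * K ^+ n / c < (2%:R : R) ^+ e.
  apply: lt_trans he _; rewrite -natrX ltr_nat; exact: ltn_expl.
pose eps := ((2%:R : R) ^+ e)^-1.
have E0 : 0 < (2%:R : R) ^+ e by rewrite exprn_gt0.
have [tb htb] := nat_gt ((2%:R : R) ^+ e / d ^+ 2).
exists (2 * (L * m) + 2 * L + e + tb + 1)%N => t ht p hp.
have ht' : (2 * (L * m) + 2 * L + e <= t)%N by move: ht; clear; lia.
have tpos : (0 < t)%N by move: ht; clear; lia.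
have hteps : (t%:R * d ^+ 2)^-1 <= eps.
  have d2 : 0 < d ^+ 2 by rewrite exprn_gt0.
  have tR : (0 : R) < t%:R by rewrite ltr0n.
  have tdp : 0 < t%:R * d ^+ 2 by apply: mulr_gt0.
  rewrite /eps lef_pV2; last 2 first.
  - by rewrite posrE.
  - by rewrite posrE.
  have tbt : (tb <= t)%N by move: ht; clear; lia.
  have : (tb%:R : R) <= t%:R by rewrite ler_nat.
  move: htb; rewrite ltr_pdivrMr // => h1 h2.
  apply: ltW; apply: lt_le_trans h1 _; rewrite ler_pM2r //.
have hfp := hf p hp.
have hp01 i : 0 <= p ord0 i <= 1 by apply: hp.
set Pr := Prob R n t p _.
suff : Pr <= f p \/ 2%:R / 7%:R <= f p.
  have := Prob_le1 (t:=t) (fun x => 2^-1 <= f (sample_mean R n t x)) hp.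
  rewrite -/Pr; case/andP: hfp => f0 f1 hP1 h; exact: final_arith.
case: (leP (2%:R / 7%:R) (f p)) => hfp27; [by right | left].
pose Ev := fun x : 'M[bool]_(t, n) => 2^-1 <= f (sample_mean R n t x).
pose Cs (tau : {ffun 'I_n -> option bool}) (j i : 'I_n) : pred {ffun 'I_t -> bool} :=
  fun cc => (region eta (colmean R cc) == tau i) && ((i != j) || (d <= `|colmean R cc - p ord0 i|)).
pose good (tau : {ffun 'I_n -> option bool}) :=
  exists q0, face R n (Aset tau) (Sset tau) (Bset tau) q0 /\ f q0 != 0.
pose G tau j (x : 'M[bool]_(t, n)) := if `[< good tau >] then
  (if [forall i, Cs tau j i (PartB.col x i)] then sample_weight R n t p x else 0) else 0.
have G0 tau j x : 0 <= G tau j x.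
  by rewrite /G; case: ifP => _ //; case: ifP => _ //; apply: sample_weight_ge0.
have step1 : Pr <= \sum_x \sum_tau \sum_j G tau j x.
  apply: (@le_trans _ _ (\sum_(x | Ev x) \sum_tau \sum_j G tau j x)); last first.
    rewrite [leRHS](bigID Ev) /= lerDl.
    by apply: sumr_ge0 => x _; apply: sumr_ge0 => tau _; apply: sumr_ge0.
  apply: ler_sum => x hx.
  set q := sample_mean R n t x.
  have hq i : q ord0 i = colmean R (PartB.col x i) by apply: sample_meanE.
  have qc : cube R n q.
    move=> i; rewrite hq /colmean; apply/andP; split.
      by rewrite divr_ge0 // ler0n.
    by rewrite ler_pdivrMr ?ltr0n // mul1r ler_nat ones_le.
  have [j hj] : exists j, d <= `|q ord0 j - p ord0 j|.
    case: (boolP [exists j, d <= `|q ord0 j - p ord0 j|]) => [/existsP // | hn].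
    exfalso; apply: (@arith2 _ (f q) (f p) hx hfp27); apply: hd => // i.
    by move: hn; rewrite negb_exists => /forallP /(_ i); rewrite -ltNge.
  pose tx : {ffun 'I_n -> option bool} := [ffun i => region eta (q ord0 i)].
  have hr i := rnd_props eta0 heta (qc i).
  have hgood : good tx.
    exists (\row_i rnd eta (q ord0 i)); split.
      split; [|split] => i; rewrite !inE ffunE mxE => /eqP h; rewrite /rnd h //.
      by have [_ _ h3] := hr i; apply: h3.
    apply: (@arith3 _ (f q) _ hx); apply: hd => //.
      by move=> i; rewrite mxE; case: (hr i).
    by move=> i; rewrite mxE; case: (hr i).
  have hall : [forall i, Cs tx j i (PartB.col x i)].
    apply/forallP => i; rewrite /Cs -hq ffunE eqxx /=.
    by case: (eqVneq i j) => [->|//]; rewrite hj orbT.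
  have -> : sample_weight R n t p x = G tx j x by rewrite /G (asboolT hgood) hall.
  exact: (@le_sum2 _ _ _ (fun tau j => G tau j x) tx j (fun tau j => G0 tau j x)).
have step2 : \sum_x \sum_tau \sum_j G tau j x = \sum_tau \sum_j \sum_x G tau j x.
  by rewrite exchange_big; apply: eq_bigr => tau _; rewrite exchange_big.
pose B := eps * K ^+ n * (f p / c).
have B0 : 0 <= B.
  have fp0 : 0 <= f p by case/andP: hfp.
  have K0 : 0 <= K by apply: le_trans K1.
  rewrite /B /eps; apply: mulr_ge0; last by rewrite divr_ge0 // ltW.
  by rewrite mulr_ge0 ?exprn_ge0 // invr_ge0 ltW.
have step3 tau j : \sum_x G tau j x <= B.
  rewrite /G; case: (asboolP (good tau)) => hg; last by rewrite big1.
  rewrite -big_mkcond /=.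
  have -> : \sum_(x | [forall i, Cs tau j i (PartB.col x i)]) sample_weight R n t p x =
    Prob R n t p (fun x => [forall i, Cs tau j i (PartB.col x i)]) by [].
  rewrite (Prob_prod p (Cs tau j)).
  apply: (@le_trans _ _ (\prod_i ((if i == j then eps else 1) * K * gfun (tau i) (p ord0 i) ^+ m))).
    apply: ler_prod => i _; apply/andP; split; first exact: P1_ge0.
    apply: (P1_region_bound hL ht' (hp01 i)).
    - by move=> cc /andP [/eqP].
    - case: eqP => _; first exact: lexx.
      by rewrite invf_le1 // exprn_ege1 // ler1n.
    - case: eqP => [->|_]; last exact: P1_le1.
      apply: le_trans (P1_mono (hp01 j) (E' := fun cc => d <= `|colmean R cc - p ord0 j|) _) _.
        by move=> cc /andP [_]; rewrite eqxx.
      exact: le_trans (cheb (hp01 j) d0 tpos) hteps.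
  rewrite !big_split /= -big_mkcond big_pred1_eq prodr_const card_ord prodrXl -fm_prod.
  rewrite /B; apply: ler_wpM2l.
    have K0 : 0 <= K by apply: le_trans K1.
    by rewrite /eps mulr_ge0 ?exprn_ge0 // invr_ge0 ltW.
  rewrite ler_pdivlMr // mulrC; exact: (hpb _ _ _ (part3 tau) hg p hp).
have step4 : \sum_(tau : {ffun 'I_n -> option bool}) \sum_(j : 'I_n) B <= f p.
  rewrite sumr_const card_ffun card_option card_bool sumr_const !card_ord.
  rewrite -mulrnA -mulr_natl /B.
  set X := (3 ^ n * n)%:R * K ^+ n / c.
  have -> : (n * 3 ^ n)%:R * (eps * K ^+ n * (f p / c)) = (X * eps) * f p.
    by rewrite /X mulnC; ring.
  apply: ler_piMl; first by case/andP: hfp.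
  by rewrite /eps ler_pdivrMr // mul1r ltW.
apply: (le_trans step1); rewrite step2.
apply: le_trans step4.
by apply: ler_sum => tau _; apply: ler_sum => j _; apply: step3.
Qed.
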